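(* Let $m,v,x,y$ be nonzero real numbers, let $w\geq 0$ and let $u\in\mathbb{R}$. Let $\mathfrak{n}$ be the five-dimensional real Lie algebra with basis $\{E_1,\dots,E_5\}$ whose only non-vanishing brackets (up to antisymmetry) are $$[E_1,E_2]=mE_3+uE_5,\qquad [E_1,E_3]=vE_4+wE_5,\qquad [E_1,E_4]=xE_5,\qquad [E_2,E_3]=yE_5.$$ Equip the corresponding simply connected nilpotent Lie group with the left-invariant Riemannian metric for which $\{E_1,\dots,E_5\}$ is orthonormal. Then this metric is an algebraic Ricci soliton if and only if $$u=w=0,\qquad m^2=v^2=\tfrac32x^2,\qquad y^2=x^2.$$ In that case $$c=-\tfrac{11}4x^2,\qquad D=\mathrm{diag}\big(\tfrac34x^2,\tfrac32x^2,\tfrac94x^2,3x^2,\tfrac{15}4x^2\big),$$ where $D$ is written as a matrix with respect to the basis $\{E_1,\dots,E_5\}$.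
   Context: Let $G$ be a Lie group with Lie algebra $\mathfrak{g}$ and let $g$ be a left-invariant Riemannian metric on $G$. Let $\mathrm{Ric}$ denote the $(1,1)$ Ricci tensor of $g$, viewed as a linear endomorphism of $\mathfrak{g}$. The metric $g$ is an algebraic Ricci soliton if there are a real number $c$ and a derivation $D$ of $\mathfrak{g}$ such that $\mathrm{Ric}=c\,\mathrm{Id}+D$. The notation $\mathrm{diag}(a_1,\dots,a_5)$ denotes the diagonal matrix with these entries. *)

(* Defs.v *)
From HB Require Import structures.
From mathcomp Require Import all_boot all_order all_algebra.
Set Implicit Arguments. Unset Strict Implicit. Unset Printing Implicit Defensive.
Import Order.TTheory GRing.Theory Num.Theory.
Local Open Scope ring_scope.

Section LieMetric.
Variables (R : realFieldType) (n : nat).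

(* Vectors of the Lie algebra are coordinate columns w.r.t. a fixed basis
   E_0, ..., E_(n-1); the left-invariant metric makes this basis orthonormal,
   i.e. the metric is the standard dot product in these coordinates. *)
Definition basisv (k : 'I_n) : 'cV[R]_n := delta_mx k 0.

Definition dotv (X Y : 'cV[R]_n) : R := (X^T *m Y) 0 0.

Definition lie_bracket (br : 'I_n -> 'I_n -> 'cV[R]_n) (X Y : 'cV[R]_n) : 'cV[R]_n :=
  \sum_(i < n) \sum_(j < n) (X i 0 * Y j 0) *: br i j.

(* Levi-Civita connection of the left-invariant metric, via the Koszul formula:
   <nabla_X Y, Z> = 1/2 (<[X,Y],Z> - <[Y,Z],X> + <[Z,X],Y>). *)
Definition levi_civita br (X Y : 'cV[R]_n) : 'cV[R]_n :=
  \col_(k < n) (2^-1 * (dotv (lie_bracket br X Y) (basisv k)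
                         - dotv (lie_bracket br Y (basisv k)) X
                         + dotv (lie_bracket br (basisv k) X) Y)).

Definition curvature br (X Y Z : 'cV[R]_n) : 'cV[R]_n :=
  levi_civita br X (levi_civita br Y Z) - levi_civita br Y (levi_civita br X Z)
  - levi_civita br (lie_bracket br X Y) Z.

Definition ricci_form br (Y Z : 'cV[R]_n) : R :=
  \sum_(k < n) dotv (curvature br (basisv k) Y Z) (basisv k).

(* (1,1) Ricci tensor as a matrix w.r.t. the orthonormal basis:
   Ric E_j = sum_i ric(E_i, E_j) E_i  (column convention: entry (i,j)). *)
Definition ricci_op br : 'M[R]_n :=
  \matrix_(i < n, j < n) ricci_form br (basisv i) (basisv j).

Definition is_derivation br (D : 'M[R]_n) : Prop :=
  forall X Y : 'cV[R]_n,
    D *m lie_bracket br X Y = lie_bracket br (D *m X) Y + lie_bracket br X (D *m Y).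

Definition is_alg_ricci_soliton br : Prop :=
  exists (c : R) (D : 'M[R]_n), is_derivation br D /\ ricci_op br = c%:M + D.

End LieMetric.

(* The five-dimensional nilpotent Lie algebra of the statement; the paper's
   E_1,...,E_5 are basisv 0, ..., basisv 4. *)
Definition br5 (R : realFieldType) (m u v w x y : R) (i j : 'I_5) : 'cV[R]_5 :=
  let E (k : nat) : 'cV[R]_5 := @basisv R 5 (inord k) in
  match nat_of_ord i, nat_of_ord j with
  | 0, 1 => m *: E 2 + u *: E 4
  | 1, 0 => - (m *: E 2 + u *: E 4)
  | 0, 2 => v *: E 3 + w *: E 4
  | 2, 0 => - (v *: E 3 + w *: E 4)
  | 0, 3 => x *: E 4
  | 3, 0 => - (x *: E 4)
  | 1, 2 => y *: E 4
  | 2, 1 => - (y *: E 4)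
  | _, _ => 0
  end.

(* Main.v *)
Require Import Defs.
From HB Require Import structures.
From mathcomp Require Import all_boot all_order all_algebra ring lra.
Set Implicit Arguments. Unset Strict Implicit. Unset Printing Implicit Defensive.
Import Order.TTheory GRing.Theory Num.Theory.
Local Open Scope ring_scope.

Section Gen.
Variables (R : realFieldType) (n : nat) (br : 'I_n -> 'I_n -> 'cV[R]_n).
Local Notation E := (@basisv R n).

Definition Cc i j k := br i j k 0.
Definition Gc a b k := 2^-1 * (Cc a b k - Cc b k a + Cc k a b).

Lemma dotvE (X Y : 'cV[R]_n) : dotv X Y = \sum_k X k 0 * Y k 0.
Proof. by rewrite /dotv mxE; apply: eq_bigr => k _; rewrite mxE. Qed.

Lemma basisvE k i : E k i 0 = (i == k)%:R.
Proof. by rewrite /basisv mxE eqxx andbT. Qed.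

Lemma sum_basisl k (F : 'I_n -> R) : \sum_p E k p 0 * F p = F k.
Proof.
rewrite (bigD1 k) //= basisvE eqxx mul1r big1 ?addr0 // => p /negPf Hp.
by rewrite basisvE Hp mul0r.
Qed.

Lemma sum_basisr k (F : 'I_n -> R) : \sum_p F p * E k p 0 = F k.
Proof. by rewrite -(sum_basisl k F); apply: eq_bigr => p _; rewrite mulrC. Qed.

Lemma lbE X Y k : lie_bracket br X Y k 0 = \sum_i \sum_j X i 0 * Y j 0 * Cc i j k.
Proof.
rewrite /lie_bracket summxE; apply: eq_bigr => i _.
by rewrite summxE; apply: eq_bigr => j _; rewrite mxE.
Qed.

Lemma lb_basisr X b k : lie_bracket br X (E b) k 0 = \sum_i X i 0 * Cc i b k.
Proof.
rewrite lbE; apply: eq_bigr => i _.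
rewrite -(sum_basisl b (fun j => X i 0 * Cc i j k)).
by apply: eq_bigr => j _; rewrite mulrA [X i 0 * _]mulrC.
Qed.

Lemma lb_basisl Y a k : lie_bracket br (E a) Y k 0 = \sum_j Y j 0 * Cc a j k.
Proof.
rewrite lbE (eq_bigr (fun i => E a i 0 * \sum_j Y j 0 * Cc i j k)).
  by rewrite sum_basisl.
by move=> i _; rewrite big_distrr; apply: eq_bigr => j _; rewrite -mulrA.
Qed.

Lemma lb_basis a b : lie_bracket br (E a) (E b) = br a b.
Proof.
apply/matrixP => k j; rewrite ord1 lb_basisl sum_basisl //.
Qed.

Lemma lcE X Y k : levi_civita br X Y k 0 = \sum_a \sum_b X a 0 * Y b 0 * Gc a b k.
Proof.
rewrite /levi_civita mxE !dotvE.
rewrite (eq_bigr (fun l => lie_bracket br X Y l 0 * E k l 0)) // sum_basisr lbE.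
have h2 : \sum_l lie_bracket br Y (E k) l 0 * X l 0
          = \sum_a \sum_b X a 0 * Y b 0 * Cc b k a.
  apply: eq_bigr => a _; rewrite lb_basisr mulrC big_distrr.
  by apply: eq_bigr => b _ /=; ring.
have h3 : \sum_l lie_bracket br (E k) X l 0 * Y l 0
          = \sum_a \sum_b X a 0 * Y b 0 * Cc k a b.
  rewrite exchange_big; apply: eq_bigr => b _; rewrite lb_basisl mulrC big_distrr.
  by apply: eq_bigr => a _ /=; ring.
rewrite h2 h3 -sumrN -!big_split big_distrr /=; apply: eq_bigr => a _.
rewrite -sumrN -!big_split big_distrr /=; apply: eq_bigr => b _.
rewrite /Gc; ring.
Qed.

Lemma lc_basisl a Z k : levi_civita br (E a) Z k 0 = \sum_q Z q 0 * Gc a q k.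
Proof.
rewrite lcE (eq_bigr (fun i => E a i 0 * \sum_q Z q 0 * Gc i q k)).
  by rewrite sum_basisl.
by move=> i _; rewrite big_distrr; apply: eq_bigr => j _ /=; rewrite -!mulrA.
Qed.

Lemma lc_basisr Z b k : levi_civita br Z (E b) k 0 = \sum_p Z p 0 * Gc p b k.
Proof.
rewrite lcE; apply: eq_bigr => p _.
rewrite -(sum_basisl b (fun q => Z p 0 * Gc p q k)).
apply: eq_bigr => q _ /=; ring.
Qed.

Lemma mxBE (A B : 'cV[R]_n) i j : (A - B) i j = A i j - B i j.
Proof. by rewrite !mxE. Qed.

Lemma ricciE a b : ricci_op br a b = \sum_k (\sum_q Gc a b q * Gc k q k
   - \sum_q Gc k b q * Gc a q k - \sum_q Cc k a q * Gc q b k).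
Proof.
rewrite /ricci_op mxE /ricci_form; apply: eq_bigr => k _.
rewrite dotvE sum_basisr /curvature !mxBE !lc_basisl lc_basisr lb_basis.
congr (_ - _ - _); apply: eq_bigr => q _; first by rewrite lc_basisl sum_basisl.
by rewrite lc_basisl sum_basisl.
Qed.

Lemma mulE_basis (D : 'M[R]_n) a i : (D *m E a) i 0 = D i a.
Proof. by rewrite mxE sum_basisr. Qed.

Lemma deriv_eq D : is_derivation br D -> forall a b k,
  \sum_l D k l * Cc a b l = \sum_i D i a * Cc i b k + \sum_j D j b * Cc a j k.
Proof.
move=> H a b k; have := congr1 (fun M : 'cV_n => M k 0) (H (E a) (E b)).
rewrite /= mxE lb_basis => ->; rewrite mxE lb_basisr lb_basisl.
by congr (_ + _); apply: eq_bigr => i _; rewrite mulE_basis.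
Qed.

Lemma diag_deriv (d : 'rV[R]_n) :
  (forall i j k, d 0 k * Cc i j k = (d 0 i + d 0 j) * Cc i j k) ->
  is_derivation br (diag_mx d).
Proof.
move=> H X Y; apply/matrixP => k z; rewrite ord1 !mul_diag_mx !mxE !lbE.
rewrite big_distrr -big_split; apply: eq_bigr => i _ /=.
rewrite big_distrr -big_split; apply: eq_bigr => j _ /=.
rewrite !mxE mulrCA -[in LHS]mulrA H; ring.
Qed.
End Gen.


Section B5.
Variables (R : realFieldType) (m u v w x y : R).

Definition Cn (i j k : nat) : R :=
 let e (a : nat) : R := (k == a)%:R in
 match i, j with
 | 0, 1 => m * e 2 + u * e 4
 | 1, 0 => - (m * e 2 + u * e 4)
 | 0, 2 => v * e 3 + w * e 4
 | 2, 0 => - (v * e 3 + w * e 4)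
 | 0, 3 => x * e 4
 | 3, 0 => - (x * e 4)
 | 1, 2 => y * e 4
 | 2, 1 => - (y * e 4)
 | _, _ => 0
 end.

Lemma eq_inord5 (k : 'I_5) (a : nat) : (a < 5)%N -> (k == inord a) = (val k == a).
Proof. by move=> ha; rewrite -val_eqE /= inordK. Qed.

Lemma C5E i j k : Cc (br5 m u v w x y) i j k = Cn i j k.
Proof.
rewrite /Cc /br5 /Cn.
case: i => [[|[|[|[|[|i]]]]] Hi]; try by [].
all: case: j => [[|[|[|[|[|j]]]]] Hj]; try by [].
all: by rewrite /= ?mxE ?eqxx ?andbT ?eq_inord5.
Qed.

Local Notation br := (br5 m u v w x y).

Definition sum5 (g : nat -> R) := g 0%N + g 1%N + g 2%N + g 3%N + g 4%N.
Lemma sum5E (g : nat -> R) : \sum_(i < 5) g (val i) = sum5 g.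
Proof. by rewrite !big_ord_recr big_ord0 /= add0r. Qed.

Definition Gn a b k := 2^-1 * (Cn a b k - Cn b k a + Cn k a b).
Definition ricn a b := sum5 (fun k => sum5 (fun q => Gn a b q * Gn k q k)
   - sum5 (fun q => Gn k b q * Gn a q k) - sum5 (fun q => Cn k a q * Gn q b k)).

Lemma ricnE (a b : 'I_5) : ricci_op br a b = ricn (val a) (val b).
Proof.
rewrite ricciE /ricn -sum5E; apply: eq_bigr => k _.
rewrite -!sum5E; congr (_ - _ - _); apply: eq_bigr => q _; by rewrite /Gc /Gn !C5E.
Qed.

Definition Rn (i j : nat) : R :=
 match i, j with
 | 0, 0 => - (m^+2 + u^+2 + v^+2 + w^+2 + x^+2) / 2
 | 0, 1 => - (w * y) / 2
 | 0, 2 => u * y / 2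
 | 1, 0 => - (w * y) / 2
 | 1, 1 => - (m^+2 + u^+2 + y^+2) / 2
 | 1, 2 => - (u * w) / 2
 | 1, 3 => - (u * x) / 2
 | 2, 0 => u * y / 2
 | 2, 1 => - (u * w) / 2
 | 2, 2 => (m^+2 - v^+2 - w^+2 - y^+2) / 2
 | 2, 3 => - (w * x) / 2
 | 2, 4 => m * u / 2
 | 3, 1 => - (u * x) / 2
 | 3, 2 => - (w * x) / 2
 | 3, 3 => (v^+2 - x^+2) / 2
 | 3, 4 => v * w / 2
 | 4, 2 => m * u / 2
 | 4, 3 => v * w / 2
 | 4, 4 => (u^+2 + w^+2 + x^+2 + y^+2) / 2
 | _, _ => 0
 end.

Lemma ricn_Rn a b : (a < 5)%N -> (b < 5)%N -> ricn a b = Rn a b.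
Proof.
move=> ha hb.
case: a ha => [|[|[|[|[|a]]]]] ha //; case: b hb => [|[|[|[|[|b]]]]] hb //.
all: by rewrite /ricn /sum5 /Gn /Cn /Rn /=; field.
Qed.
End B5.

Section B5b.
Variables (R : realFieldType) (m u v w x y : R).
Local Notation br := (br5 m u v w x y).
Local Notation Cn := (Cn m u v w x y).
Local Notation Rn := (Rn m u v w x y).

Lemma Dent c D : ricci_op br = c%:M + D ->
  forall i j : 'I_5, D i j = Rn (val i) (val j) - c * (val i == val j)%:R.
Proof.
move=> H i j; have := congr1 (fun M : 'M_5 => M i j) H.
rewrite /= ricnE ricn_Rn ?ltn_ord // !mxE => ->.
by rewrite val_eqE mulr_natr addrAC subrr add0r.
Qed.

Lemma derivn c D : is_derivation br D -> ricci_op br = c%:M + D ->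
  forall a b k : 'I_5,
  sum5 (fun l => (Rn (val k) l - c * (val k == l)%:R) * Cn (val a) (val b) l)
  = sum5 (fun i => (Rn i (val a) - c * (i == val a)%:R) * Cn i (val b) (val k))
  + sum5 (fun j => (Rn j (val b) - c * (j == val b)%:R) * Cn (val a) j (val k)).
Proof.
move=> HD HR a b k; have := deriv_eq HD a b k.
rewrite -!sum5E.
rewrite (eq_bigr (fun l : 'I_5 => (Rn (val k) (val l) - c * (val k == val l)%:R)
            * Cn (val a) (val b) (val l))); last by move=> l _; rewrite (Dent HR) C5E.
move=> ->; congr (_ + _); apply: eq_bigr => l _; by rewrite (Dent HR) C5E.
Qed.

Lemma onlyif c D : m != 0 -> v != 0 -> x != 0 -> y != 0 ->
  is_derivation br D -> ricci_op br = c%:M + D ->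
  [/\ u = 0, w = 0, m ^+ 2 = v ^+ 2, v ^+ 2 = 3 / 2 * x ^+ 2 & y ^+ 2 = x ^+ 2]
  /\ c = - (11 / 4 * x ^+ 2).
Proof.
move=> hm hv hx hy HD HR.
pose o0 := @Ordinal 5 0 isT. pose o1 := @Ordinal 5 1 isT.
pose o2 := @Ordinal 5 2 isT. pose o3 := @Ordinal 5 3 isT.
pose o4 := @Ordinal 5 4 isT.
have e1 : m * u * x = 0.
  have := derivn HD HR o0 o3 o2; rewrite /sum5 /Rn /Cn /=.
  move/eqP; rewrite -subr_eq0 => /eqP E; rewrite -E; by field.
have e2 : v * w * x = 0.
  have := derivn HD HR o0 o3 o3; rewrite /sum5 /Rn /Cn /=.
  move/eqP; rewrite -subr_eq0 => /eqP E; rewrite -E; by field.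
have hu : u = 0.
  by apply/eqP; move/eqP: e1; rewrite !mulf_eq0 (negbTE hm) (negbTE hx) /= orbF.
have hw : w = 0.
  by apply/eqP; move/eqP: e2; rewrite !mulf_eq0 (negbTE hv) (negbTE hx) /= orbF.
have e3 : m * (3/2 * m^+2 + 1/2 * x^+2 + c) = 0.
  have := derivn HD HR o0 o1 o2; rewrite /sum5 /Rn /Cn /= hu hw.
  move/eqP; rewrite -subr_eq0 => /eqP E; rewrite -E; by field.
have e4 : v * (3/2 * v^+2 + 1/2 * y^+2 + c) = 0.
  have := derivn HD HR o0 o2 o3; rewrite /sum5 /Rn /Cn /= hu hw.
  move/eqP; rewrite -subr_eq0 => /eqP E; rewrite -E; by field.
have e5 : x * (3/2 * x^+2 + 1/2 * y^+2 + 1/2 * m^+2 + c) = 0.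
  have := derivn HD HR o0 o3 o4; rewrite /sum5 /Rn /Cn /= hu hw.
  move/eqP; rewrite -subr_eq0 => /eqP E; rewrite -E; by field.
have e6 : y * (1/2 * x^+2 + 3/2 * y^+2 + 1/2 * v^+2 + c) = 0.
  have := derivn HD HR o1 o2 o4; rewrite /sum5 /Rn /Cn /= hu hw.
  move/eqP; rewrite -subr_eq0 => /eqP E; rewrite -E; by field.
move/eqP: e3; rewrite mulf_eq0 (negbTE hm) /= => /eqP f3.
move/eqP: e4; rewrite mulf_eq0 (negbTE hv) /= => /eqP f4.
move/eqP: e5; rewrite mulf_eq0 (negbTE hx) /= => /eqP f5.
move/eqP: e6; rewrite mulf_eq0 (negbTE hy) /= => /eqP f6.
split; first split => //; lra.
Qed.

Lemma ricci_diag c : u = 0 -> w = 0 -> m ^+ 2 = v ^+ 2 -> v ^+ 2 = 3 / 2 * x ^+ 2 ->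
  y ^+ 2 = x ^+ 2 -> c = - (11 / 4 * x ^+ 2) ->
  ricci_op br = c%:M + diag_mx (\row_(i < 5) ([:: 3 / 4; 3 / 2; 9 / 4; 3; 15 / 4]`_i * x ^+ 2)).
Proof.
move=> hu hw hmv hv hy ->; apply/matrixP => i j.
rewrite ricnE ricn_Rn ?ltn_ord // !mxE -!val_eqE.
case: i => [[|[|[|[|[|i]]]]] Hi] //; case: j => [[|[|[|[|[|j]]]]] Hj] //.
all: rewrite /Rn /= ?hu ?hw ?hmv ?hv ?hy; by field.
Qed.

Lemma diag5_deriv : u = 0 -> w = 0 ->
  is_derivation br (diag_mx (\row_(i < 5) ([:: 3 / 4; 3 / 2; 9 / 4; 3; 15 / 4]`_i * x ^+ 2))).
Proof.
move=> hu hw; apply: diag_deriv => i j k; rewrite !C5E !mxE.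
case: i => [[|[|[|[|[|i]]]]] Hi] //; case: j => [[|[|[|[|[|j]]]]] Hj] //.
all: case: k => [[|[|[|[|[|k]]]]] Hk] //.
all: rewrite /Cn /= ?hu ?hw; by field.
Qed.
End B5b.


Theorem mainTheorem6 (R : realFieldType) (m u v w x y : R) :
  m != 0 -> v != 0 -> x != 0 -> y != 0 -> 0 <= w ->
  (is_alg_ricci_soliton (br5 m u v w x y) <->
     [/\ u = 0, w = 0, m ^+ 2 = v ^+ 2, v ^+ 2 = 3 / 2 * x ^+ 2 & y ^+ 2 = x ^+ 2])
  /\
  ([/\ u = 0, w = 0, m ^+ 2 = v ^+ 2, v ^+ 2 = 3 / 2 * x ^+ 2 & y ^+ 2 = x ^+ 2] ->
   forall (c : R) (D : 'M[R]_5),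
     is_derivation (br5 m u v w x y) D ->
     ricci_op (br5 m u v w x y) = c%:M + D ->
     c = - (11 / 4 * x ^+ 2) /\
     D = diag_mx (\row_(i < 5) ([:: 3 / 4; 3 / 2; 9 / 4; 3; 15 / 4]`_i * x ^+ 2))).
Proof.
move=> hm hv hx hy hw0; split.
  split.
    by case=> c [D [HD HR]]; case: (onlyif hm hv hx hy HD HR).
  case=> hu hw hmv hv2 hy2.
  exists (- (11 / 4 * x ^+ 2)).
  exists (diag_mx (\row_(i < 5) ([:: 3 / 4; 3 / 2; 9 / 4; 3; 15 / 4]`_i * x ^+ 2))).
  split; first exact: diag5_deriv.
  exact: ricci_diag.
case=> hu hw hmv hv2 hy2 c D HD HR.
have [_ hc] := onlyif hm hv hx hy HD HR.
split => //.
have HR' := ricci_diag hu hw hmv hv2 hy2 hc.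
rewrite HR in HR'; exact: (addrI _ HR').
Qed.
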